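(* $\mathrm{Ord}$, with the structure $(\mathrm{Ord},<,\le,\underline 0,\sup,\mathrm{succ})$ induced from $\mathrm{ord}$, is an initial object in the category of $\mathfrak F$-orders: for every $\mathfrak F$-order $(E,<_E,\le_E,0_E,\sup_E,\mathrm{succ}_E)$ there is a unique morphism of $\mathfrak F$-orders $\mathrm{Ord}\to E$.
   Context: Work constructively. Let $\mathfrak F$ be a set of index sets containing $\mathbb N$ and each $\mathbb N_k=\{n\in\mathbb N:n<k\}$ ($k\ge0$), closed (up to isomorphism) under finitely enumerated subsets, sets of finitely enumerated subsets, and disjoint unions indexed by elements of $\mathfrak F$. A finitely enumerated subset of $A$ is one given by a map $\mathbb N_k\to A$; write $F\subseteq_f I$. $\mathfrak F$-orders: a structure $(E,<,\le,0_E,\sup,\mathrm{succ})$ where $<,\le$ are binary relations on $E$, $0_E\in E$, $E^*=\{\alpha\in E:0_E<\alpha\}$, $\sup$ maps each family $(\alpha_i)_{i\in I}$ with $I\in\mathfrak F$ and $\alpha_i\in E^*$ to an element of $E^*$, and $\mathrm{succ}:E\to E^*$; binary sup is defined by $\sup(0_E,\alpha)=\sup(\alpha,0_E)=\alpha$ and, for $\alpha,\beta\in E^*$, by the given $\sup$. Axioms: (1) $\alpha=\beta$ iff $\alpha\le\beta$ and $\beta\le\alpha$; (2) $0_E\le\alpha$; (3) if $\alpha<\alpha$ then $0_E=\beta$; (4) $\alpha<\beta$ implies $\alpha\le\beta$; (5) $\alpha\le\beta\le\gamma$ implies $\alpha\le\gamma$; (6) $\alpha<\beta\le\gamma$ implies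 $\alpha<\gamma$; (7) $\alpha\le\beta<\gamma$ implies $\alpha<\gamma$; (8) $\alpha<\mathrm{succ}(\beta)$ iff $\alpha\le\beta$; (9) $\mathrm{succ}(\beta)\le\alpha$ iff $\beta<\alpha$; (10) $\alpha<\gamma$ and $\beta<\gamma$ imply $\sup(\alpha,\beta)<\gamma$; (11) $\alpha<\sup(\alpha,\beta)$ implies $\alpha<\beta$; (12) $\gamma<\alpha$ and $\alpha\le\sup(\beta,\gamma)$ imply $\alpha\le\beta$; (13) for $(\alpha_i)_{i\in I}$ in $E^*$, $I\in\mathfrak F$, and $\beta\in E$: $\alpha_i\le\beta$ for all $i$ iff $\sup(\alpha_i)_{i\in I}\le\beta$; (14) if $\gamma<\beta$ for all $\gamma<\alpha$, then $\alpha\le\beta$; (15) $\alpha\le0_E$ or $0_E<\alpha$. Morphisms of $\mathfrak F$-orders are maps preserving the relations $<$, $\le$, the element $0$, $\sup$ and $\mathrm{succ}$. Ordinals: $\mathrm{ord}$ is inductively generated by $\underline 0$ and, for every family $(\alpha_i)_{i\in I}$ with $I\in\mathfrak F$, $\alpha_i\in\mathrm{ord}$, an element $\mathrm S(\alpha_i)_{i\in I}$; these form $\mathrm{ord}^*$; for such $\alpha$, $I_\alpha=I$ and $\alpha_i$ are its definitional subordinals; $I_{\underline 0}=\emptyset$. $\mathrm{succ}(\alpha)$ is $\mathrm S$ of the one-element family $(\alpha)$. For a finite list $F$ in $I_\alpha$, $\alpha_F$ is the list of the $\alpha_i$, $i\in F$. Supremum: for $(\alpha^j)_{j\in J}$ in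 $\mathrm{ord}^*$, $J\in\mathfrak F$, $\sup(\alpha^j)_{j\in J}=\mathrm S(\varepsilon_k)_{k\in K}$ with $K$ the disjoint union of the $I_{\alpha^j}$ (injections $\iota_j$) and $\varepsilon_{\iota_j(i)}=(\alpha^j)_i$. Relations between an element and a nonempty finite list, by simultaneous induction: $\alpha\le\beta^1,\dots,\beta^m$ means $\alpha_i<\beta^1,\dots,\beta^m$ for all $i\in I_\alpha$; $\alpha<\beta^1,\dots,\beta^m$ means there exist $F_1\subseteq_f I_{\beta^1},\dots,F_m\subseteq_f I_{\beta^m}$, not all empty, with $\alpha\le\beta^1_{F_1},\dots,\beta^m_{F_m}$; $\alpha\le\beta$, $\alpha<\beta$ are the case $m=1$. $\alpha=_{\mathrm{Ord}}\beta$ means $\alpha\le\beta$ and $\beta\le\alpha$; it is an equivalence relation compatible with this structure, and $\mathrm{Ord}$ is the quotient, which is an $\mathfrak F$-order. *)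

(* Defs.v *)
From mathcomp Require Import ssreflect ssrfun ssrbool eqtype ssrnat seq fintype.
From Stdlib Require List.

Set Implicit Arguments.
Unset Strict Implicit.
Unset Printing Implicit Defensive.

Record Iso (A B : Type) := {
  iso_to : A -> B;
  iso_from : B -> A;
  iso_tofrom : forall b, iso_to (iso_from b) = b;
  iso_fromto : forall a, iso_from (iso_to a) = a }.

(* The set  F  of index sets, as a universe of codes [code] decoded by *)
(* [El].  A finitely enumerated subset  F ⊆_f I  (a map N_k -> I) is   *)
(* represented by the list of its values, [seq (El c)].                *)
Record FUniverse := {
  code : Type;
  El : code -> Type;
  cNat : code;
  isoNat : Iso (El cNat) nat;
  cFin : nat -> code;
  isoFin : forall k, Iso (El (cFin k)) 'I_k;
  cSub : forall c, seq (El c) -> code;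
  isoSub : forall c (s : seq (El c)), Iso (El (cSub s)) {x : El c | List.In x s};
  cFsub : code -> code;
  isoFsub : forall c, Iso (El (cFsub c)) (seq (El c));
  cSig : forall c, (El c -> code) -> code;
  isoSig : forall c (J : El c -> code), Iso (El (cSig J)) {i : El c & El (J i)} }.

Arguments cFin {U} k : rename.
Arguments cSig {U} c J : rename.

(* F-orders.  A carrier with its equality (a setoid, as sets in a      *)
(* constructive setting), relations <, <=, 0, sup and succ.            *)
Record FOData (U : FUniverse) := {
  car : Type;
  feq : car -> car -> Prop;
  flt : car -> car -> Prop;
  fle : car -> car -> Prop;
  fzero : car;
  fsup : forall c : code U, (El c -> {x : car | flt fzero x}) -> car;
  fsucc : car -> car }.

Arguments feq {U} E _ _ : rename.
Arguments flt {U} E _ _ : rename.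
Arguments fle {U} E _ _ : rename.
Arguments fzero {U} E : rename.
Arguments fsup {U} E c _ : rename.
Arguments fsucc {U} E _ : rename.

Section FOrderDefs.
Variables (U : FUniverse) (E : FOData U).

Definition EStar := {x : car E | flt E (fzero E) x}.

Definition pairFam (a b : EStar) : El (cFin 2) -> EStar :=
  fun i => if nat_of_ord (iso_to (isoFin U 2) i) == 0 then a else b.

Definition IsBSup (a b s : car E) : Prop :=
  (feq E a (fzero E) /\ feq E s b) \/
  (feq E b (fzero E) /\ feq E s a) \/
  (exists (Ha : flt E (fzero E) a) (Hb : flt E (fzero E) b),
      feq E s (fsup E (cFin 2) (pairFam (exist _ a Ha) (exist _ b Hb)))).

Record IsFOrder : Prop := {
  ax1 : forall a b, feq E a b <-> fle E a b /\ fle E b a;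
  ax2 : forall a, fle E (fzero E) a;
  ax3 : forall a b, flt E a a -> feq E (fzero E) b;
  ax4 : forall a b, flt E a b -> fle E a b;
  ax5 : forall a b g, fle E a b -> fle E b g -> fle E a g;
  ax6 : forall a b g, flt E a b -> fle E b g -> flt E a g;
  ax7 : forall a b g, fle E a b -> flt E b g -> flt E a g;
  ax8 : forall a b, flt E a (fsucc E b) <-> fle E a b;
  ax9 : forall a b, fle E (fsucc E b) a <-> flt E b a;
  ax10 : forall a b g, flt E a g -> flt E b g ->
           forall s, IsBSup a b s -> flt E s g;
  ax11 : forall a b s, IsBSup a b s -> flt E a s -> flt E a b;
  ax12 : forall a b g s, flt E g a -> IsBSup b g s -> fle E a s -> fle E a b;
  ax13 : forall (c : code U) (al : El c -> EStar) (b : car E),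
           (forall i, fle E (sval (al i)) b) <-> fle E (fsup E c al) b;
  ax14 : forall a b, (forall g, flt E g a -> flt E g b) -> fle E a b;
  ax15 : forall a, fle E a (fzero E) \/ flt E (fzero E) a;
  ax_succ : forall a, flt E (fzero E) (fsucc E a) }.

End FOrderDefs.

Arguments EStar {U} E.
Arguments IsBSup {U} E a b s.
Arguments IsFOrder {U} E.

(* Morphisms of F-orders: preserve <, <=, 0, sup, succ (up to the      *)
(* equality of the target).  For sup: for every E*-family al and every  *)
(* F*-family be representing f o al, f (sup al) = sup be.               *)
Definition IsMorph (U : FUniverse) (E F : FOData U) (f : car E -> car F) : Prop :=
  (forall a b, flt E a b -> flt F (f a) (f b)) /\
  (forall a b, fle E a b -> fle F (f a) (f b)) /\
  feq F (f (fzero E)) (fzero F) /\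
  (forall (c : code U) (al : El c -> EStar E) (be : El c -> EStar F),
     (forall i, feq F (sval (be i)) (f (sval (al i)))) ->
     feq F (f (fsup E c al)) (fsup F c be)) /\
  (forall a, feq F (f (fsucc E a)) (fsucc F (f a))).

Inductive ord (U : FUniverse) : Type :=
  | O0 : ord U
  | OS : forall c : code U, (El c -> ord U) -> ord U.

Arguments O0 {U}.
Arguments OS {U} c _.

Section Ordinals.
Variable U : FUniverse.

Definition idxc (b : ord U) : code U :=
  match b with O0 => cFin 0 | OS c _ => c end.

Definition subc (b : ord U) : El (idxc b) -> ord U :=
  match b return El (idxc b) -> ord U with
  | O0 => fun _ => O0
  | OS c f => f
  end.

(* A choice of finitely enumerated subsets F_j ⊆_f I_{beta^j}, one for *)
(* each entry beta^j of a list beta^1,...,beta^m.                      *)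
Fixpoint SelT (bs : seq (ord U)) : Type :=
  match bs with
  | [::] => unit
  | b :: bs' => (seq (El (idxc b)) * SelT bs')%type
  end.

Fixpoint selList (bs : seq (ord U)) : SelT bs -> seq (ord U) :=
  match bs return SelT bs -> seq (ord U) with
  | [::] => fun _ => [::]
  | b :: bs' => fun p => map (@subc b) p.1 ++ selList p.2
  end.

Fixpoint selNonempty (bs : seq (ord U)) : SelT bs -> Prop :=
  match bs return SelT bs -> Prop with
  | [::] => fun _ => False
  | b :: bs' => fun p => (0 < size p.1)%N \/ selNonempty p.2
  end.

Fixpoint ord_le (a : ord U) (bs : seq (ord U)) {struct a} : Prop :=
  match a with
  | O0 => True
  | OS c f => forall i : El c,
      exists s : SelT bs, selNonempty s /\ ord_le (f i) (selList s)
  end.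

Definition ord_lt (a : ord U) (bs : seq (ord U)) : Prop :=
  exists s : SelT bs, selNonempty s /\ ord_le a (selList s).

Definition oLe (a b : ord U) : Prop := ord_le a [:: b].
Definition oLt (a b : ord U) : Prop := ord_lt a [:: b].
Definition oEq (a b : ord U) : Prop := oLe a b /\ oLe b a.

Definition osucc (a : ord U) : ord U := OS (cFin 1) (fun _ => a).

Definition osup (J : code U) (a : El J -> ord U) : ord U :=
  OS (cSig J (fun j => idxc (a j)))
     (fun k => let p := iso_to (isoSig (fun j => idxc (a j))) k in
               subc (projT2 p)).

Definition OrdFO : FOData U :=
  {| car := ord U;
     feq := oEq;
     flt := oLt;
     fle := oLe;
     fzero := O0;
     fsup := fun c al => osup (fun j => sval (al j));
     fsucc := osucc |}.

End Ordinals.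

Arguments IsMorph {U} E F f.
Arguments OrdFO U : clear implicits.

(* Main.v *)
Require Import Defs.
From mathcomp Require Import ssreflect ssrfun ssrbool eqtype ssrnat seq fintype.
From Stdlib Require Import List Classical.
Import ListNotations.


Definition isSub {U} (L : list (ord U)) (y : ord U) : Prop :=
  exists b, In b L /\ exists i : El (idxc b), y = subc i.
Definition subsOf {U} (L M : list (ord U)) : Prop := forall y, In y M -> isSub L y.
Definition inclL {U} (M M' : list (ord U)) : Prop := forall y, In y M -> In y M'.
Definition LT {U} (y : ord U) (L : list (ord U)) : Prop :=
  exists M, M <> [::] /\ subsOf L M /\ ord_le y M.
Definition LEL {U} (L M : list (ord U)) : Prop := forall l, In l L -> ord_le l M.

Lemma El0_false {U} (i : El (@cFin U 0)) : False.
Proof. destruct (iso_to (isoFin U 0) i) as [m Hm]. by rewrite ltn0 in Hm. Qed.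

Lemma inclL_refl {U} (L : list (ord U)) : inclL L L.
Proof. by intros y H. Qed.
Lemma inclL_appl {U} (L M : list (ord U)) : inclL L (L ++ M).
Proof. intros y H; apply in_or_app; left; exact H. Qed.
Lemma inclL_appr {U} (L M : list (ord U)) : inclL M (L ++ M).
Proof. intros y H; apply in_or_app; right; exact H. Qed.
Lemma inclL_trans {U} (L M N : list (ord U)) : inclL L M -> inclL M N -> inclL L N.
Proof. intros H1 H2 y H; auto. Qed.
Lemma inclL_app {U} (L M N : list (ord U)) : inclL L N -> inclL M N -> inclL (L ++ M) N.
Proof. intros H1 H2 y H; apply in_app_or in H; destruct H; auto. Qed.
Lemma inclL_ne {U} (L M : list (ord U)) : inclL L M -> L <> [::] -> M <> [::].
Proof. destruct L as [|x L]; [congruence|]. intros H _ E. specialize (H x (or_introl erefl)). rewrite E in H. destruct H. Qed.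

Lemma isSub_mono {U} (L L' : list (ord U)) y : inclL L L' -> isSub L y -> isSub L' y.
Proof. intros H [b [Hb Hi]]. exists b; split; auto. Qed.
Lemma subsOf_mono {U} (L L' M : list (ord U)) : inclL L L' -> subsOf L M -> subsOf L' M.
Proof. intros H1 H2 y Hy. eapply isSub_mono; eauto. Qed.
Lemma subsOf_incl {U} (L M M' : list (ord U)) : inclL M' M -> subsOf L M -> subsOf L M'.
Proof. intros H1 H2 y Hy; auto. Qed.
Lemma subsOf_app {U} (L M M' : list (ord U)) : subsOf L M -> subsOf L M' -> subsOf L (M ++ M').
Proof. intros H1 H2 y Hy; apply in_app_or in Hy; destruct Hy; auto. Qed.
Lemma subsOf_nil {U} (L : list (ord U)) : subsOf L [::].
Proof. intros y []. Qed.

Lemma sel_sub {U} {L : list (ord U)} (s : SelT L) : subsOf L (selList s).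
Proof.
  induction L as [|b L IH]; simpl in *. intros y [].
  destruct s as [F s]. simpl. intros y Hy. apply in_app_or in Hy. destruct Hy as [Hy|Hy].
  - apply in_map_iff in Hy. destruct Hy as [i [<- _]]. exists b. split. left; reflexivity. exists i; reflexivity.
  - destruct (IH s y Hy) as [b' [Hb' Hi]]. exists b'; split; [right; exact Hb' | exact Hi].
Qed.

Lemma sel_ne {U} {L : list (ord U)} (s : SelT L) : selNonempty s <-> selList s <> [::].
Proof.
  induction L as [|b L IH]; simpl.
  - split; [intros []| intros H; apply H; reflexivity].
  - destruct s as [F s]; simpl. rewrite IH. destruct F as [|x F]; simpl.
    + split. intros [H|H]; [discriminate H| exact H]. intros H; right; exact H.
    + split. intros _; discriminate. intros _; left; reflexivity.
Qed.

Lemma sel_empty {U} (L : list (ord U)) : exists s : SelT L, selList s = [::].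
Proof.
  induction L as [|b L IH]. exists tt; reflexivity.
  destruct IH as [s Hs]. exists ([::], s). simpl. exact Hs.
Qed.

Lemma addSel {U} (L : list (ord U)) b (Hb : In b L) (i : El (idxc b)) (s : SelT L) :
  exists s' : SelT L, inclL (selList s') (subc i :: selList s) /\ inclL (subc i :: selList s) (selList s').
Proof.
  induction L as [|b0 L IH]; [destruct Hb|].
  destruct s as [F s]. destruct Hb as [E|Hb].
  - subst b0. exists (i :: F, s). simpl. split; apply inclL_refl.
  - destruct (IH Hb s) as [s' [H1 H2]]. exists (F, s'). simpl. split.
    + intros y Hy. apply in_app_or in Hy. destruct Hy as [Hy|Hy].
      right. apply in_or_app; left; exact Hy.
      destruct (H1 y Hy) as [E|E]. left; exact E. right; apply in_or_app; right; exact E.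
    + intros y [E|Hy]. apply in_or_app; right; apply H2; left; exact E.
      apply in_app_or in Hy. destruct Hy as [Hy|Hy]. apply in_or_app; left; exact Hy.
      apply in_or_app; right; apply H2; right; exact Hy.
Qed.

Lemma realize {U} {L M : list (ord U)} : subsOf L M ->
  exists s : SelT L, inclL M (selList s) /\ inclL (selList s) M.
Proof.
  induction M as [|m M IH]; intros HM.
  - destruct (sel_empty L) as [s Hs]. exists s. rewrite Hs. split; apply inclL_refl.
  - destruct (HM m (or_introl erefl)) as [b [Hb [i Em]]].
    destruct IH as [s [H1 H2]]. intros y Hy; apply HM; right; exact Hy.
    destruct (@addSel U L b Hb i s) as [s' [H3 H4]]. exists s'. subst m. split.
    + intros y [E|Hy]. apply H4; left; exact E. apply H4; right; apply H1; exact Hy.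
    + intros y Hy. destruct (H3 y Hy) as [E|E]. left; exact E. right; apply H2; exact E.
Qed.

Lemma le_mono {U} (x : ord U) : forall L L', inclL L L' -> ord_le x L -> ord_le x L'.
Proof.
  induction x as [|c f IH]; simpl; auto.
  intros L L' HL H i. destruct (H i) as [s [Hne Hle]].
  destruct (@realize U L' (selList s)) as [s' [H1 H2]].
  { intros y Hy. eapply isSub_mono; [exact HL|]. exact (sel_sub s y Hy). }
  exists s'. split.
  - apply sel_ne. apply sel_ne in Hne. eapply inclL_ne; eauto.
  - eapply IH; eauto.
Qed.

Lemma LT_iff {U} (y : ord U) L : ord_lt y L <-> LT y L.
Proof.
  split.
  - intros [s [ne le]]. exists (selList s). split; [apply sel_ne; exact ne|]. split; [apply sel_sub|exact le].
  - intros [M [ne [sub le]]]. destruct (realize sub) as [s [H1 H2]]. exists s. split.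
    apply sel_ne. eapply inclL_ne; eauto. eapply le_mono; eauto.
Qed.

Lemma le_OS {U} c (f : El c -> ord U) L : ord_le (OS c f) L <-> forall i, LT (f i) L.
Proof. simpl. split; intros H i; apply LT_iff; apply H. Qed.

Lemma le_char {U} (x : ord U) L : ord_le x L <-> forall y, isSub [:: x] y -> LT y L.
Proof.
  destruct x as [|c f].
  - split; [|intros; exact I]. intros _ y [b [[E|[]] [i _]]]. subst b. destruct (El0_false i).
  - rewrite le_OS. split.
    + intros H y [b [[E|[]] [i ->]]]. subst b. apply H.
    + intros H i. apply H. exists (OS c f). split; [left; reflexivity|]. exists i; reflexivity.
Qed.

Lemma le_refl_in {U} (x : ord U) : forall L, In x L -> ord_le x L.
Proof.
  induction x as [|c f IH]; [simpl; auto|].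
  intros L HL. apply le_OS. intros i. exists [:: f i]. split; [discriminate|]. split.
  - intros y [E|[]]. subst y. exists (OS c f). split; auto. exists i; reflexivity.
  - apply IH. left; reflexivity.
Qed.

Lemma le_refl {U} (x : ord U) : ord_le x [:: x].
Proof. apply le_refl_in. left; reflexivity. Qed.

Lemma LT_mono {U} (y : ord U) L L' : inclL L L' -> LT y L -> LT y L'.
Proof. intros H [M [ne [sub le]]]. exists M. split; auto. split; auto. eapply subsOf_mono; eauto. Qed.

Lemma isSub_LT {U} (L M : list (ord U)) y : LEL L M -> isSub L y -> LT y M.
Proof.
  intros H [b [Hb [i ->]]]. apply (proj1 (le_char b M) (H b Hb)).
  exists b. split; [left; reflexivity|]. exists i; reflexivity.
Qed.

Lemma collect {U} (M N : list (ord U)) : (forall n, In n N -> LT n M) ->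
  exists N', subsOf M N' /\ LEL N N' /\ (N <> [::] -> N' <> [::]).
Proof.
  induction N as [|n N IH]; intros H.
  - exists [::]. split; [apply subsOf_nil|]. split; [intros l []|congruence].
  - destruct (H n (or_introl erefl)) as [K [Kne [Ksub Kle]]].
    destruct IH as [N' [H1 [H2 H3]]]. intros m Hm; apply H; right; exact Hm.
    exists (K ++ N'). split; [apply subsOf_app; auto|]. split.
    + intros l [E|Hl]. subst l. eapply le_mono; [apply inclL_appl|exact Kle].
      eapply le_mono; [apply inclL_appr|exact (H2 l Hl)].
    + intros _. destruct K; [congruence|discriminate].
Qed.

Lemma le_trans {U} (x : ord U) : forall L M, ord_le x L -> LEL L M -> ord_le x M.
Proof.
  induction x as [|c f IH]; [simpl; auto|].
  intros L M H HL. apply le_OS. intros i. have H' := proj1 (le_OS c f L) H; clear H; rename H' into H.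
  destruct (H i) as [N [Nne [Nsub Nle]]].
  destruct (@collect U M N) as [N' [H1 [H2 H3]]].
  { intros n Hn. eapply isSub_LT; eauto. }
  exists N'. split; auto. split; auto. eapply IH; eauto.
Qed.

Lemma lt_le {U} (y : ord U) : forall L, LT y L -> ord_le y L.
Proof.
  induction y as [|c f IH]; [simpl; auto|].
  intros L [N [Nne [Nsub Nle]]]. apply le_OS. intros i. exists N. split; auto. split; auto.
  apply IH. exact (proj1 (le_OS c f N) Nle i).
Qed.

Lemma lt_trans {U} (x : ord U) L M : LT x L -> LEL L M -> LT x M.
Proof.
  intros [N [Nne [Nsub Nle]]] HL.
  destruct (@collect U M N) as [N' [H1 [H2 H3]]].
  { intros n Hn. eapply isSub_LT; eauto. }
  exists N'. split; auto. split; auto. eapply le_trans; eauto.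
Qed.

Lemma le_lt {U} (x b : ord U) M : ord_le x [:: b] -> LT b M -> LT x M.
Proof.
  intros H [N [Nne [Nsub Nle]]]. exists N. split; auto. split; auto.
  eapply le_trans; eauto. intros l [E|[]]. subst; exact Nle.
Qed.

Lemma LT_nil {U} (y : ord U) : LT y [::] -> False.
Proof.
  intros [N [Nne [Nsub _]]]. destruct N as [|n N]; [congruence|].
  destruct (Nsub n (or_introl erefl)) as [b [[] _]].
Qed.

Definition Rl {U} (X' X : list (ord U)) : Prop := X' <> [::] /\ subsOf X X'.

Lemma acc_nil {U} : Acc (@Rl U) [::].
Proof.
  constructor. intros D [Dne Dsub]. destruct D as [|d D]; [congruence|].
  destruct (Dsub d (or_introl erefl)) as [b [[] _]].
Qed.

Lemma sub_acc {U} {C X : list (ord U)} : inclL C X -> Acc Rl X -> Acc Rl C.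
Proof.
  intros H HX. constructor. intros D [Dne Dsub]. apply (Acc_inv HX). split; auto.
  eapply subsOf_mono; eauto.
Qed.

Lemma partition {U} {A B C : list (ord U)} : subsOf (A ++ B) C ->
  exists C1 C2, subsOf A C1 /\ subsOf B C2 /\ inclL C (C1 ++ C2) /\ inclL C1 C /\ inclL C2 C.
Proof.
  induction C as [|c C IH]; intros H.
  - exists [::], [::]. repeat split; try apply subsOf_nil; intros y [].
  - destruct IH as [C1 [C2 [H1 [H2 [H3 [H4 H5]]]]]].
    { intros y Hy; apply H; right; exact Hy. }
    destruct (H c (or_introl erefl)) as [b [Hb Hi]].
    apply in_app_or in Hb. destruct Hb as [Hb|Hb].
    + exists (c :: C1), C2. split.
      { intros y [E|Hy]. subst y. exists b; split; auto. auto. }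
      split; auto. split.
      { intros y [E|Hy]. left; exact E. right. auto. }
      split. intros y [E|Hy]. left; exact E. right; auto.
      intros y Hy; right; auto.
    + exists C1, (c :: C2). split; auto. split.
      { intros y [E|Hy]. subst y. exists b; split; auto. auto. }
      split.
      { intros y [E|Hy]. apply in_or_app; right; left; exact E.
        destruct (in_app_or _ _ _ (H3 y Hy)) as [Z|Z]. apply in_or_app; left; exact Z.
        apply in_or_app; right; right; exact Z. }
      split. intros y Hy; right; auto.
      intros y [E|Hy]. left; exact E. right; auto.
Qed.

Lemma app_acc {U} (A B : list (ord U)) : Acc Rl A -> Acc Rl B -> Acc Rl (A ++ B).
Proof.
  intros HA. revert B. induction HA as [A _ IHA]. intros B HB.
  induction HB as [B HB' IHB].
  constructor. intros C [Cne Csub].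
  destruct (partition Csub) as [C1 [C2 [H1 [H2 [H3 [H4 H5]]]]]].
  apply (sub_acc H3).
  assert (AC2 : Acc Rl C2).
  { destruct C2 as [|c2 C2']. apply acc_nil.
    apply (sub_acc (@inclL_appr U A _)). apply IHB. split; [discriminate|exact H2]. }
  destruct C1 as [|c1 C1']. exact AC2.
  apply IHA; auto. split; [discriminate|exact H1].
Qed.

Lemma acc_list {U} (D : list (ord U)) : (forall d, In d D -> Acc Rl [:: d]) -> Acc Rl D.
Proof.
  induction D as [|d D IH]; intros H. apply acc_nil.
  apply (@app_acc U [:: d] D). apply H; left; reflexivity. apply IH; intros e He; apply H; right; exact He.
Qed.

Lemma acc_single {U} (x : ord U) : Acc Rl [:: x].
Proof.
  induction x as [|c f IH].
  - constructor. intros D [Dne Dsub]. destruct D as [|d D]; [congruence|].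
    destruct (Dsub d (or_introl erefl)) as [b [[E|[]] [i _]]]. subst b. destruct (El0_false i).
  - constructor. intros D [Dne Dsub]. apply acc_list. intros d Hd.
    destruct (Dsub d Hd) as [b [[E|[]] [i ->]]]. subst b. apply IH.
Qed.

Lemma acc_all {U} (X : list (ord U)) : Acc Rl X.
Proof. apply acc_list. intros d _. apply acc_single. Qed.

Lemma collect2 {U} (P0 M P : list (ord U)) : (forall p, In p P -> LT p (P0 ++ M)) ->
  exists Q K, subsOf P0 Q /\ subsOf M K /\ LEL P (Q ++ K).
Proof.
  induction P as [|p P IH]; intros H.
  - exists [::], [::]. split; [apply subsOf_nil|]. split; [apply subsOf_nil|]. intros l [].
  - destruct IH as [Q [K [H1 [H2 H3]]]]. intros q Hq; apply H; right; exact Hq.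
    destruct (H p (or_introl erefl)) as [N [Nne [Nsub Nle]]].
    destruct (partition Nsub) as [N1 [N2 [G1 [G2 [G3 _]]]]].
    exists (N1 ++ Q), (N2 ++ K). split; [apply subsOf_app; auto|]. split; [apply subsOf_app; auto|].
    intros l [E|Hl].
    + subst l. eapply le_mono; [|exact Nle]. intros y Hy. have Z := in_app_or _ _ _ (G3 y Hy).
      rewrite !in_app_iff. tauto.
    + eapply le_mono; [|exact (H3 l Hl)]. intros y Hy.
      rewrite !in_app_iff. rewrite !in_app_iff in Hy. tauto.
Qed.

Lemma key {U} (X : list (ord U)) : Acc Rl X -> forall P M,
  LEL X (P ++ M) -> subsOf X P -> LEL X M.
Proof.
  intros HX. induction HX as [X _ IH]. intros P M HXPM HP x Hx.
  apply le_char. intros y Hy.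
  assert (Hy' : isSub X y).
  { destruct Hy as [b [[E|[]] Hi]]. subst b. exists x; split; auto. }
  destruct (proj1 (le_char x (P ++ M)) (HXPM x Hx) y Hy) as [N [Nne [Nsub Nle]]].
  destruct (partition Nsub) as [N1 [N2 [G1 [G2 [G3 _]]]]].
  destruct (@collect2 U P M P) as [Q [K [H1 [H2 H3]]]].
  { intros p Hp. eapply isSub_LT; eauto. }
  assert (R : Rl (y :: P) X).
  { split; [discriminate|]. intros z [E|Hz]. subst z; exact Hy'. auto. }
  assert (IH' := IH (y :: P) R (N1 ++ Q) (N2 ++ K)).
  assert (LX : LEL (y :: P) (N2 ++ K)).
  { apply IH'.
    - intros z [E|Hz].
      + subst z. eapply le_mono; [|exact Nle]. intros w Hw. have Z := in_app_or _ _ _ (G3 w Hw).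
        rewrite !in_app_iff. tauto.
      + eapply le_mono; [|exact (H3 z Hz)]. intros w Hw. rewrite !in_app_iff in Hw.
        rewrite !in_app_iff. tauto.
    - apply subsOf_app; eapply subsOf_mono; try eassumption; intros w Hw; right; exact Hw. }
  remember (N2 ++ K) as M' eqn:EM. destruct M' as [|z Z].
  - exfalso. symmetry in EM. apply app_eq_nil in EM. destruct EM as [E1 E2]. subst N2 K.
    destruct N as [|n N]; [congruence|].
    assert (Hn : In n N1). { destruct (in_app_or _ _ _ (G3 n (or_introl erefl))) as [Z|[]]. exact Z. }
    destruct (G1 n Hn) as [p [Hp [k ->]]].
    apply (@LT_nil U (subc k)). eapply isSub_LT. exact LX. exists p. split. right; exact Hp. exists k; reflexivity.
  - exists (z :: Z). split; [discriminate|]. split.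
    + rewrite EM. apply subsOf_app; auto.
    + rewrite EM. apply LX. left; reflexivity.
Qed.

Definition sameSub {U} (L L' : list (ord U)) : Prop := forall y, isSub L y <-> isSub L' y.

Lemma sameSub_LT {U} (L L' : list (ord U)) x : sameSub L L' -> LT x L -> LT x L'.
Proof. intros H [M [ne [sub le]]]. exists M. split; auto. split; auto. intros y Hy; apply H; auto. Qed.

Lemma sameSub_le {U} (L L' : list (ord U)) x : sameSub L L' -> ord_le x L -> ord_le x L'.
Proof. intros H. rewrite !le_char. intros H1 y Hy. eapply sameSub_LT; eauto. Qed.

Lemma isSub_cons {U} (a : ord U) L y : isSub (a :: L) y <-> isSub [:: a] y \/ isSub L y.
Proof.
  split.
  - intros [b [[E|Hb] Hi]]. left; exists b; split; auto; left; auto. right; exists b; auto.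
  - intros [[b [[E|[]] Hi]]|[b [Hb Hi]]]. exists b; split; auto; left; auto. exists b; split; auto; right; auto.
Qed.

Lemma isSub_osup {U} J (al : El J -> ord U) y :
  isSub [:: osup al] y <-> exists j, isSub [:: al j] y.
Proof.
  split.
  - intros [b [[E|[]] [k ->]]]. subst b.
    exists (projT1 (iso_to (isoSig (fun j => idxc (al j))) k)).
    exists (al (projT1 (iso_to (isoSig (fun j => idxc (al j))) k))). split; [left; reflexivity|].
    exists (projT2 (iso_to (isoSig (fun j => idxc (al j))) k)). reflexivity.
  - intros [j [b [[E|[]] [i ->]]]]. subst b. exists (osup al). split; [left; reflexivity|].
    exists (iso_from (isoSig (fun j => idxc (al j))) (existT _ j i)). simpl.
    rewrite iso_tofrom. reflexivity.
Qed.

Lemma El1 {U} : El (@cFin U 1).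
Proof. exact (iso_from (isoFin U 1) ord0). Defined.

Lemma isSub_succ {U} (a y : ord U) : isSub [:: osucc a] y <-> y = a.
Proof.
  split.
  - intros [b [[E|[]] [i ->]]]. subst b. reflexivity.
  - intros ->. exists (osucc a). split; [left; reflexivity|]. exists El1. reflexivity.
Qed.

Lemma isSub_pair {U} (a b : ord U) Ha Hb y :
  (exists j, isSub [:: sval (@pairFam U (OrdFO U) (exist _ a Ha) (exist _ b Hb) j)] y)
  <-> isSub [:: a; b] y.
Proof.
  split.
  - intros [j Hj]. unfold pairFam in Hj.
    destruct (nat_of_ord (iso_to (isoFin U 2) j) == 0); simpl in Hj;
      eapply isSub_mono; try exact Hj; intros z [E|[]]; subst z; [left|right;left]; reflexivity.
  - intros H. apply isSub_cons in H. destruct H as [H|H].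
    + exists (iso_from (isoFin U 2) ord0). unfold pairFam. rewrite iso_tofrom. simpl. exact H.
    + exists (iso_from (isoFin U 2) (@Ordinal 2 1 isT)). unfold pairFam. rewrite iso_tofrom. simpl.
      destruct H as [c [[E|[]] Hi]]. exists c. split; [left; exact E|exact Hi].
Qed.

Definition Good {U} (a b s : ord U) : Prop :=
  (forall x, LT x [:: s] <-> LT x [:: a; b]) /\
  (forall x, ord_le x [:: s] <-> ord_le x [:: a; b]) /\
  (forall M, ord_le s M <-> ord_le a M /\ ord_le b M).

Lemma good_of_same {U} (a b t : ord U) : sameSub [:: t] [:: a; b] -> Good a b t.
Proof.
  intros H. assert (H' : sameSub [:: a; b] [:: t]). { intros y; split; apply H. }
  split; [|split].
  - intros x; split; apply sameSub_LT; auto.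
  - intros x; split; apply sameSub_le; auto.
  - intros M. rewrite !le_char. split.
    + intros G. split; intros y Hy; apply G, H, isSub_cons; auto.
    + intros [G1 G2] y Hy. apply H, isSub_cons in Hy. destruct Hy as [Hy|Hy]; auto.
Qed.

Lemma good_eq {U} (a b s t : ord U) : Good a b t -> ord_le s [:: t] -> ord_le t [:: s] -> Good a b s.
Proof.
  intros [G1 [G2 G3]] H1 H2.
  assert (L1 : LEL [:: s] [:: t]). { intros l [E|[]]; subst; auto. }
  assert (L2 : LEL [:: t] [:: s]). { intros l [E|[]]; subst; auto. }
  split; [|split].
  - intros x. rewrite <- G1. split; intros H; eapply lt_trans; eauto.
  - intros x. rewrite <- G2. split; intros H; eapply le_trans; eauto.
  - intros M. rewrite <- G3. split; intros H; eapply le_trans; eauto; intros l [E|[]]; subst; auto.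
Qed.

Lemma noSub_of_le0 {U} (a : ord U) : ord_le a [:: O0] -> forall y, ~ isSub [:: a] y.
Proof.
  intros H y Hy. destruct (proj1 (le_char a _) H y Hy) as [N [ne [sub _]]].
  destruct N as [|n N]; [congruence|]. destruct (sub n (or_introl erefl)) as [b [[E|[]] [i _]]].
  subst b. exact (El0_false i).
Qed.

Lemma bsup_good {U} (a b s : ord U) : IsBSup (OrdFO U) a b s -> Good a b s.
Proof.
  intros [[[Ha0 _] [Hs1 Hs2]] | [[[Hb0 _] [Hs1 Hs2]] | [Ha [Hb [Hs1 Hs2]]]]].
  - apply (@good_eq U a b s b); auto. apply good_of_same. intros y; split.
    + apply isSub_mono. intros z [E|[]]; subst; right; left; reflexivity.
    + intros Hy. apply isSub_cons in Hy. destruct Hy as [Hy|Hy]. destruct (noSub_of_le0 _ Ha0 _ Hy). exact Hy.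
  - apply (@good_eq U a b s a); auto. apply good_of_same. intros y; split.
    + apply isSub_mono. intros z [E|[]]; subst; left; reflexivity.
    + intros Hy. apply isSub_cons in Hy. destruct Hy as [Hy|Hy]. exact Hy.
      destruct Hy as [c [[E|[]] Hi]]. subst c. destruct (noSub_of_le0 _ Hb0 y).
      exists b; split; [left; reflexivity|exact Hi].
  - eapply good_eq; [|exact Hs1|exact Hs2]. apply good_of_same. intros y.
    simpl. rewrite isSub_osup. apply isSub_pair.
Qed.

Lemma ord_irr {U} (a : ord U) : LT a [:: a] -> False.
Proof.
  intros [N [ne [sub le]]].
  assert (H := @key U [:: a] (acc_all _) N [::]).
  assert (H1 : LEL [:: a] [::]).
  { apply H; auto. intros l [E|[]]. subst l. rewrite cats0. exact le. }
  destruct N as [|n N]; [congruence|].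
  apply (@LT_nil U n). apply (proj1 (le_char a [::]) (H1 a (or_introl erefl))). apply sub. left; reflexivity.
Qed.

Lemma ord_forder U : IsFOrder (OrdFO U).
Proof.
  constructor; cbn [feq flt fle fzero fsup fsucc OrdFO]; unfold oEq, oLt, oLe.
  - intros a b; reflexivity.
  - intros a; exact I.
  - intros a b H. apply LT_iff in H. destruct (ord_irr _ H).
  - intros a b H. apply lt_le. apply LT_iff. exact H.
  - intros a b g H1 H2. eapply le_trans; [exact H1|]. intros l [E|[]]; subst; exact H2.
  - intros a b g H1 H2. apply LT_iff. apply LT_iff in H1. eapply lt_trans; [exact H1|].
    intros l [E|[]]; subst; exact H2.
  - intros a b g H1 H2. apply LT_iff. apply LT_iff in H2. eapply le_lt; eauto.
  - intros a b. rewrite LT_iff. split.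
    + intros [N [ne [sub le]]]. eapply le_mono; [|exact le]. intros y Hy.
      have W := proj1 (isSub_succ _ _) (sub y Hy). subst; left; reflexivity.
    + intros H. exists [:: b]. split; [discriminate|]. split; auto.
      intros y [E|[]]. subst. apply isSub_succ. reflexivity.
  - intros a b. rewrite LT_iff le_char. split.
    + intros H. apply H. apply isSub_succ. reflexivity.
    + intros H y Hy. apply isSub_succ in Hy. subst; exact H.
  - intros a b g H1 H2 s Hs. apply LT_iff in H1. apply LT_iff in H2. apply LT_iff.
    destruct (bsup_good _ _ _ Hs) as [_ [_ G3]].
    destruct H1 as [N1 [ne1 [sub1 le1]]]. destruct H2 as [N2 [ne2 [sub2 le2]]].
    exists (N1 ++ N2). split. destruct N1; [congruence|discriminate].
    split. apply subsOf_app; auto. apply G3. split; eapply le_mono; eauto.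
    apply inclL_appl. apply inclL_appr.
  - intros a b s Hs H. apply LT_iff in H. apply LT_iff.
    destruct (bsup_good _ _ _ Hs) as [G1 _]. apply G1 in H.
    destruct H as [N [ne [sub le]]].
    destruct (@partition U [:: a] [:: b] N sub) as [N1 [N2 [H1 [H2 [H3 _]]]]].
    assert (K := @key U [:: a] (acc_all _) N1 N2).
    assert (K' : LEL [:: a] N2).
    { apply K; auto. intros l [E|[]]; subst. eapply le_mono; eauto. }
    destruct N2 as [|z Z].
    + exfalso. destruct N as [|n N]; [congruence|].
      assert (Hn : In n N1). { destruct (in_app_or _ _ _ (H3 n (or_introl erefl))) as [W|[]]. exact W. }
      apply (@LT_nil U n). apply (proj1 (le_char a [::]) (K' a (or_introl erefl))). apply H1. exact Hn.
    + exists (z :: Z). split; [discriminate|]. split; auto. apply K'. left; reflexivity.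
  - intros a b g s H1 Hs H2. apply LT_iff in H1.
    destruct (bsup_good _ _ _ Hs) as [_ [G2 _]]. apply G2 in H2.
    destruct H1 as [N [ne [sub le]]].
    assert (K := @key U [:: a] (acc_all _) N [:: b]).
    apply K; [| |left; reflexivity]; auto.
    intros l [E|[]]; subst. eapply le_trans; [exact H2|].
    intros l2 [E|[E|[]]]; subst.
    + apply le_refl_in. apply in_or_app; right; left; reflexivity.
    + eapply le_mono; [|exact le]. apply inclL_appl.
  - intros c al b. rewrite le_char. split.
    + intros H y Hy. apply isSub_osup in Hy. destruct Hy as [j Hj].
      exact (proj1 (le_char _ _) (H j) y Hj).
    + intros H j. apply le_char. intros y Hy. apply H. apply isSub_osup. exists j; exact Hy.
  - intros a b H. apply le_char. intros y Hy. apply LT_iff. apply H. apply LT_iff.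
    exists [:: y]. split; [discriminate|]. split. intros z [E|[]]; subst; exact Hy.
    apply le_refl.
  - intros a. destruct (classic (exists y, isSub [:: a] y)) as [[y Hy]|H].
    + right. apply LT_iff. exists [:: y]. split; [discriminate|]. split; [|exact I].
      intros z [E|[]]; subst; exact Hy.
    + left. apply le_char. intros y Hy. destruct (H (ex_intro _ y Hy)).
  - intros a. apply LT_iff. exists [:: a]. split; [discriminate|]. split; [|exact I].
    intros z [E|[]]; subst. apply isSub_succ. reflexivity.
Qed.

Lemma E_refl {U} {E : FOData U} (HE : IsFOrder E) a : fle E a a.
Proof. apply (ax14 HE). auto. Qed.

Lemma E_eq_ub {U} {E : FOData U} (HE : IsFOrder E) x y :
  (forall b, fle E x b <-> fle E y b) -> feq E x y.
Proof. intros H. apply (ax1 HE). split; [apply H|apply (H x)]; apply E_refl; auto. Qed.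

Lemma E_eq_le {U} {E : FOData U} (HE : IsFOrder E) a b : feq E a b -> fle E a b.
Proof. intros H. exact (proj1 (proj1 (ax1 HE a b) H)). Qed.

Lemma E_eq_sym {U} {E : FOData U} (HE : IsFOrder E) a b : feq E a b -> feq E b a.
Proof. intros H. destruct (proj1 (ax1 HE a b) H) as [H1 H2]. exact (proj2 (ax1 HE b a) (conj H2 H1)). Qed.

Lemma E_eq_trans {U} {E : FOData U} (HE : IsFOrder E) a b c : feq E a b -> feq E b c -> feq E a c.
Proof.
  intros H1 H2. destruct (proj1 (ax1 HE a b) H1) as [H3 H4]. destruct (proj1 (ax1 HE b c) H2) as [H5 H6].
  apply (proj2 (ax1 HE a c)). split; eapply (ax5 HE); eauto.
Qed.

Lemma E_succ_cong {U} {E : FOData U} (HE : IsFOrder E) a b : feq E a b -> feq E (fsucc E a) (fsucc E b).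
Proof.
  intros H. destruct (proj1 (ax1 HE a b) H) as [H1 H2]. apply (proj2 (ax1 HE _ _)). split.
  - apply (ax9 HE). apply (ax8 HE). exact H1.
  - apply (ax9 HE). apply (ax8 HE). exact H2.
Qed.

Lemma bsupE {U} {E : FOData U} (HE : IsFOrder E) a b : exists m,
  fle E a m /\ fle E b m /\ (forall c, flt E a c -> flt E b c -> flt E m c).
Proof.
  destruct (ax15 HE a) as [Ha|Ha].
  - exists b. split; [eapply (ax5 HE); [exact Ha|apply (ax2 HE)]|]. split; [apply E_refl; auto|].
    intros c H1 H2. eapply (ax10 HE); [exact H1|exact H2|]. left. split.
    apply (ax1 HE); split; auto; apply (ax2 HE). apply (ax1 HE); split; apply E_refl; auto.
  - destruct (ax15 HE b) as [Hb|Hb].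
    + exists a. split; [apply E_refl; auto|]. split; [eapply (ax5 HE); [exact Hb|apply (ax2 HE)]|].
      intros c H1 H2. eapply (ax10 HE); [exact H1|exact H2|]. right; left. split.
      apply (ax1 HE); split; auto; apply (ax2 HE). apply (ax1 HE); split; apply E_refl; auto.
    + set m := fsup E (cFin 2) (pairFam (exist _ a Ha) (exist _ b Hb)).
      have Hm := proj2 (ax13 HE (pairFam (exist _ a Ha) (exist _ b Hb)) m) (E_refl HE m).
      exists m. split; [|split].
      * have := Hm (iso_from (isoFin U 2) ord0). unfold pairFam. rewrite iso_tofrom. simpl. auto.
      * have := Hm (iso_from (isoFin U 2) (@Ordinal 2 1 isT)). unfold pairFam. rewrite iso_tofrom. simpl. auto.
      * intros c H1 H2. eapply (ax10 HE); [exact H1|exact H2|]. right; right. exists Ha, Hb.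
        apply (ax1 HE); split; apply E_refl; auto.
Qed.

Lemma listmaxE {U} {E : FOData U} (HE : IsFOrder E) (Ls : list (car E)) : exists m,
  (forall y, In y Ls -> fle E y m) /\
  (forall c, (forall y, In y Ls -> flt E y c) -> flt E (fzero E) c -> flt E m c).
Proof.
  induction Ls as [|y Ls IH].
  - exists (fzero E). split; [intros y []|]. auto.
  - destruct IH as [m' [H1 H2]]. destruct (bsupE HE y m') as [m [G1 [G2 G3]]].
    exists m. split.
    + intros z [E1|Hz]. subst; auto. eapply (ax5 HE); [exact (H1 z Hz)|exact G2].
    + intros c Hc H0. apply G3. apply Hc; left; reflexivity. apply H2; auto.
      intros z Hz; apply Hc; right; exact Hz.
Qed.

Fixpoint fE {U} {E : FOData U} (HE : IsFOrder E) (x : ord U) {struct x} : car E :=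
  match x with
  | O0 => fzero E
  | OS c h => fsup E c (fun i => exist (fun z => flt E (fzero E) z)
                                       (fsucc E (fE HE (h i))) (ax_succ HE (fE HE (h i))))
  end.

Lemma fE_char {U} {E : FOData U} (HE : IsFOrder E) (x : ord U) b :
  fle E (fE HE x) b <-> forall y, isSub [:: x] y -> fle E (fsucc E (fE HE y)) b.
Proof.
  destruct x as [|c h].
  - split. intros _ y [b' [[E1|[]] [i _]]]. subst b'. destruct (El0_false i).
    intros _. apply (ax2 HE).
  - simpl. rewrite <- (ax13 HE). simpl. split.
    + intros H y [b' [[E1|[]] [i ->]]]. subst b'. exact (H i).
    + intros H i. apply H. exists (OS c h). split; [left; reflexivity|]. exists i; reflexivity.
Qed.

Definition Ple {U} {E : FOData U} (HE : IsFOrder E) (x : ord U) : Prop :=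
  forall L b, ord_le x L -> (forall l, In l L -> fle E (fE HE l) b) -> fle E (fE HE x) b.
Definition Plt {U} {E : FOData U} (HE : IsFOrder E) (x : ord U) : Prop :=
  forall L b, LT x L -> (forall l, In l L -> fle E (fE HE l) b) -> flt E (fE HE x) b.

Lemma le_to_lt {U} {E : FOData U} (HE : IsFOrder E) y : Ple HE y -> Plt HE y.
Proof.
  intros HP L b [N [ne [sub le]]] Hub.
  destruct (listmaxE HE (map (fE HE) N)) as [m [Hm1 Hm2]].
  have Hy : fle E (fE HE y) m.
  { apply (HP N m le). intros l Hl. apply Hm1. apply in_map. exact Hl. }
  have Hn : forall n, In n N -> flt E (fE HE n) b.
  { intros n Hn. destruct (sub n Hn) as [l [Hl [k ->]]].
    apply (ax9 HE). eapply (ax5 HE); [|exact (Hub l Hl)].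
    apply (proj1 (fE_char HE l (fE HE l)) (E_refl HE _)). exists l. split; [left; reflexivity|].
    exists k; reflexivity. }
  eapply (ax7 HE); [exact Hy|]. apply Hm2.
  - intros z Hz. apply in_map_iff in Hz. destruct Hz as [n [<- Hn']]. auto.
  - destruct N as [|n N]; [congruence|]. eapply (ax7 HE); [apply (ax2 HE)|]. apply Hn; left; reflexivity.
Qed.

Lemma all_Ple {U} {E : FOData U} (HE : IsFOrder E) x : Ple HE x.
Proof.
  induction x as [|c h IH].
  - intros L b _ _. apply (ax2 HE).
  - intros L b H Hub. apply fE_char. intros y [b' [[E1|[]] [i ->]]]. subst b'. simpl.
    apply (ax9 HE). apply (le_to_lt HE _ (IH i) L); auto.
    exact (proj1 (le_OS c h L) H i).
Qed.

Lemma fE_morph {U} {E : FOData U} (HE : IsFOrder E) : IsMorph (OrdFO U) E (fE HE).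
Proof.
  split; [|split; [|split; [|split]]].
  - intros a b H. apply (le_to_lt HE _ (all_Ple HE a) [:: b]). apply LT_iff; exact H.
    intros l [E1|[]]; subst; apply E_refl; auto.
  - intros a b H. apply (all_Ple HE a [:: b]). exact H.
    intros l [E1|[]]; subst; apply E_refl; auto.
  - apply (ax1 HE); split; apply E_refl; auto.
  - intros c al be Hbe. change (fsup (OrdFO U) c al) with (osup (fun j => sval (al j))).
    apply E_eq_ub; auto. intros b. rewrite fE_char. rewrite <- (ax13 HE). split.
    + intros H i. eapply (ax5 HE); [apply E_eq_le; [exact HE|exact (Hbe i)]|].
      apply fE_char. intros y Hy. apply H. apply isSub_osup. exists i; exact Hy.
    + intros H y Hy. apply isSub_osup in Hy. destruct Hy as [j Hj].
      have Hj' : fle E (fE HE (sval (al j))) b.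
      { eapply (ax5 HE); [apply E_eq_le; [exact HE|apply E_eq_sym; [exact HE|exact (Hbe j)]]|exact (H j)]. }
      exact (proj1 (fE_char HE _ b) Hj' y Hj).
  - intros a. apply E_eq_ub; auto. intros b. rewrite fE_char. split.
    + intros H. apply H. apply isSub_succ. reflexivity.
    + intros H y Hy. apply isSub_succ in Hy. subst; exact H.
Qed.

Lemma fE_unique {U} {E : FOData U} (HE : IsFOrder E) g : IsMorph (OrdFO U) E g ->
  forall x, feq E (fE HE x) (g x).
Proof.
  intros [g1 [g2 [g3 [g4 g5]]]] x. induction x as [|c h IH].
  - apply E_eq_sym; auto.
  - pose al : El c -> EStar (OrdFO U) := fun i => exist (fun z => oLt O0 z) (osucc (h i))
        (ax_succ (ord_forder U) (h i)).
    pose be : El c -> EStar E := fun i => exist (fun z => flt E (fzero E) z)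
                                       (fsucc E (fE HE (h i))) (ax_succ HE (fE HE (h i))).
    have G := g4 c al be.
    have Heq : forall y, isSub [:: OS c h] y <-> isSub [:: osup (fun j => sval (al j))] y.
    { intros y. rewrite isSub_osup. split.
      - intros [b' [[E1|[]] [i ->]]]. subst b'. exists i. simpl. apply isSub_succ. reflexivity.
      - intros [j Hj]. simpl in Hj. apply isSub_succ in Hj. subst y.
        exists (OS c h). split; [left; reflexivity|]. exists j; reflexivity. }
    have L1 : oLe (OS c h) (osup (fun j => sval (al j))).
    { apply le_char. intros y Hy. exists [:: y]. split; [discriminate|]. split; [|apply le_refl].
      intros z [E1|[]]; subst; apply Heq; exact Hy. }
    have L2 : oLe (osup (fun j => sval (al j))) (OS c h).
    { apply le_char. intros y Hy. exists [:: y]. split; [discriminate|]. split; [|apply le_refl].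
      intros z [E1|[]]; subst; apply Heq; exact Hy. }
    have Hg : feq E (g (OS c h)) (g (osup (fun j => sval (al j)))).
    { apply (ax1 HE). split; [apply g2; exact L1|apply g2; exact L2]. }
    apply E_eq_sym; auto. eapply E_eq_trans; [exact HE|exact Hg|]. apply G.
    intros i. simpl. apply E_eq_sym; auto. eapply E_eq_trans; [exact HE|apply g5|].
    apply E_succ_cong; auto. apply E_eq_sym; auto.
Qed.

Theorem theorem4p10 (U : FUniverse) :
  IsFOrder (OrdFO U) /\
  forall E : FOData U, IsFOrder E ->
    exists f : ord U -> car E,
      IsMorph (OrdFO U) E f /\
      forall g : ord U -> car E, IsMorph (OrdFO U) E g ->
        forall x : ord U, feq E (f x) (g x).
Proof.
  split. exact (ord_forder U).
  intros E HE. exists (fE HE). split. apply fE_morph. intros g Hg x. apply fE_unique; auto.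
Qed.
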